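(* Let $X$ be a first-countable well-filtered space such that $\min(K)$ is countable for every $K\in\mathsf{K}(X)$. Then the upper Vietoris topology and the Scott topology on $\mathsf{K}(X)$ coincide.
   Context: Spaces are $T_0$; specialization order $x\le y$ iff $x\in\overline{\{y\}}$; saturated = upper set. $\mathsf{K}(X)$ = nonempty compact saturated subsets ordered by reverse inclusion; $\min(K)$ is the set of minimal points of $K$ in the specialization order. Scott topology on a poset: upper sets $U$ such that every directed $D$ with existing supremum in $U$ meets $U$. Upper Vietoris topology on $\mathsf{K}(X)$: base $\Box U=\{K:K\subseteq U\}$, $U$ open. Well-filtered: for open $U$ and $\mathcal K\subseteq\mathsf{K}(X)$ filtered under inclusion, $\bigcap\mathcal K\subseteq U$ implies some $K\in\mathcal K$ lies in $U$. *)

(* Defs.v *)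
From Stdlib Require Import List.

Set Implicit Arguments.

Section Topology.
Variable X : Type.
Variable O : (X -> Prop) -> Prop.

Definition is_topology : Prop :=
  O (fun _ => True) /\
  (forall U V, O U -> O V -> O (fun x => U x /\ V x)) /\
  (forall F : (X -> Prop) -> Prop, (forall U, F U -> O U) ->
      O (fun x => exists U, F U /\ U x)).

Definition T0 : Prop :=
  forall x y, (forall U, O U -> (U x <-> U y)) -> x = y.

(* specialization order: x <= y iff x is in the closure of {y},
   i.e. every open set containing x contains y *)
Definition spec_le (x y : X) : Prop := forall U, O U -> U x -> U y.

Definition subset (A B : X -> Prop) : Prop := forall x, A x -> B x.

Definition saturated (K : X -> Prop) : Prop :=
  forall x y, K x -> spec_le x y -> K y.

Definition compact (K : X -> Prop) : Prop :=
  forall F : (X -> Prop) -> Prop,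
    (forall U, F U -> O U) ->
    (forall x, K x -> exists U, F U /\ U x) ->
    exists l : list (X -> Prop),
      (forall U, In U l -> F U) /\ (forall x, K x -> exists U, In U l /\ U x).

Definition isK (K : X -> Prop) : Prop :=
  (exists x, K x) /\ compact K /\ saturated K.

Definition first_countable : Prop :=
  forall x, exists B : nat -> (X -> Prop),
    (forall n, O (B n) /\ B n x) /\
    (forall U, O U -> U x -> exists n, subset (B n) U).

Definition filtered_incl (KK : (X -> Prop) -> Prop) : Prop :=
  (exists K, KK K) /\
  (forall K1 K2, KK K1 -> KK K2 ->
     exists K3, KK K3 /\ subset K3 K1 /\ subset K3 K2).

Definition well_filtered : Prop :=
  forall (U : X -> Prop) (KK : (X -> Prop) -> Prop),
    O U -> (forall K, KK K -> isK K) -> filtered_incl KK ->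
    subset (fun x => forall K, KK K -> K x) U ->
    exists K, KK K /\ subset K U.

Definition minset (K : X -> Prop) (x : X) : Prop :=
  K x /\ forall y, K y -> spec_le y x -> spec_le x y.

End Topology.

Definition countable_set (T : Type) (A : T -> Prop) : Prop :=
  exists g : T -> nat, forall x y, A x -> A y -> g x = g y -> x = y.

Definition KX (X : Type) (O : (X -> Prop) -> Prop) : Type :=
  { K : X -> Prop | isK O K }.

Definition KX_le (X : Type) (O : (X -> Prop) -> Prop) (A B : KX O) : Prop :=
  subset (proj1_sig B) (proj1_sig A).

(* Upper Vietoris topology: generated by the base Box U = {K | K ⊆ U}, U open *)
Definition upper_vietoris_open (X : Type) (O : (X -> Prop) -> Prop)
    (W : KX O -> Prop) : Prop :=
  forall K : KX O, W K ->
    exists U, O U /\ subset (proj1_sig K) U /\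
      (forall K' : KX O, subset (proj1_sig K') U -> W K').

Definition directed (T : Type) (le : T -> T -> Prop) (D : T -> Prop) : Prop :=
  (exists d, D d) /\
  (forall a b, D a -> D b -> exists c, D c /\ le a c /\ le b c).

Definition is_sup (T : Type) (le : T -> T -> Prop) (D : T -> Prop) (s : T) : Prop :=
  (forall d, D d -> le d s) /\
  (forall u, (forall d, D d -> le d u) -> le s u).

Definition scott_open (T : Type) (le : T -> T -> Prop) (W : T -> Prop) : Prop :=
  (forall x y, W x -> le x y -> W y) /\
  (forall D s, directed le D -> is_sup le D s -> W s -> exists d, D d /\ W d).

(* Main.v *)
Require Import Defs.
From Stdlib Require Import List Arith Lia Classical ClassicalEpsilon FunctionalExtensionality PropExtensionality.
From mathcomp Require classical_sets boolp.

Lemma ZL_prop (T : Type) (t0 : T) (R : T -> T -> Prop) :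
  (forall t, R t t) -> (forall r s t, R r s -> R s t -> R r t) ->
  (forall A : T -> Prop, (forall s t, A s -> A t -> R s t \/ R t s) ->
      exists t, forall s, A s -> R s t) ->
  exists t, forall s, R t s -> R s t.
Proof.
  intros Hr Ht Hc.
  assert (E : forall a b, boolp.asbool (R a b) = true <-> R a b).
  { intros a b. split; intro H.
    - exact (Corelib.ssr.ssrbool.elimT (boolp.asboolP _) H).
    - exact (Corelib.ssr.ssrbool.introT (boolp.asboolP _) H). }
  destruct (@classical_sets.ZL_preorder T t0 (fun a b => boolp.asbool (R a b))) as [t Ht0].
  - intro t; apply E; apply Hr.
  - intros r s t H1 H2; apply E; apply E in H1; apply E in H2; eauto.
  - intros A HA. destruct (Hc A) as [t Hat].
    + intros s t Hs Htt. destruct (HA s t Hs Htt) as [H|H]; [left|right]; apply E; exact H.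
    + exists t. intros s Hs. apply E. auto.
  - exists t. intros s Hs. apply E. apply Ht0. apply E. exact Hs.
Qed.


Lemma open_ext (X : Type) (O : (X -> Prop) -> Prop) (A B : X -> Prop) :
  O A -> (forall z, A z <-> B z) -> O B.
Proof.
  intros HA HE. replace B with A; auto.
  apply functional_extensionality. intro z. apply propositional_extensionality. auto.
Qed.

Lemma open_union_nat (X : Type) (O : (X -> Prop) -> Prop) (Htop : is_topology O)
  (G : nat -> X -> Prop) : (forall n, O (G n)) -> O (fun z => exists n, G n z).
Proof.
  intros HG. destruct Htop as [_ [_ Hu]].
  specialize (Hu (fun U => exists n, U = G n)).
  eapply open_ext. apply Hu.
  - intros U [n ->]. auto.
  - intro z. split.
    + intros [U [[n ->] Hz]]. eauto.
    + intros [n Hz]. exists (G n). eauto.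
Qed.

Lemma open_empty (X : Type) (O : (X -> Prop) -> Prop) (Htop : is_topology O) :
  O (fun _ => False).
Proof.
  destruct Htop as [_ [_ Hu]].
  eapply open_ext. apply (Hu (fun _ => False)). tauto.
  intro z. split. intros [U [[] _]]. tauto.
Qed.

Lemma open_union_list (X : Type) (O : (X -> Prop) -> Prop) (Htop : is_topology O)
  (l : list (X -> Prop)) : (forall U, In U l -> O U) -> O (fun z => exists U, In U l /\ U z).
Proof.
  intros H. destruct Htop as [_ [_ Hu]]. apply (Hu (fun U => In U l)). auto.
Qed.

Lemma open_forall_le (X : Type) (O : (X -> Prop) -> Prop) (Htop : is_topology O)
  (G : nat -> X -> Prop) : (forall i, O (G i)) ->
  forall j, O (fun z => forall i, i <= j -> G i z).
Proof.
  intros HG j. destruct Htop as [_ [Hi _]]. induction j.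
  - eapply open_ext. apply (HG 0). intro z. split.
    + intros H i Hi0. replace i with 0 by lia. auto.
    + intros H. apply H. lia.
  - eapply open_ext. apply (Hi _ _ IHj (HG (S j))). intro z. split.
    + intros [H1 H2] i Hi0. destruct (Nat.eq_dec i (S j)) as [->|]; auto. apply H1. lia.
    + intros H. split; auto.
Qed.

Lemma open_imp (X : Type) (O : (X -> Prop) -> Prop) (Htop : is_topology O)
  (P : Prop) (B : X -> Prop) : O B -> O (fun z => P -> B z).
Proof.
  intros HB. destruct (classic P) as [HP|HP].
  - eapply open_ext. apply HB. intro z. tauto.
  - eapply open_ext. apply (proj1 Htop). intro z. tauto.
Qed.

Lemma open_notbelow (X : Type) (O : (X -> Prop) -> Prop) (Htop : is_topology O) (c : X) :
  O (fun z => ~ spec_le O z c).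
Proof.
  destruct Htop as [_ [_ Hu]].
  eapply open_ext. apply (Hu (fun U => O U /\ ~ U c)). tauto.
  intro z. split.
  - intros [U [[HU Hc] Hz]] Hle. apply Hc. apply Hle; auto.
  - intros H. apply not_all_ex_not in H. destruct H as [U H].
    exists U. tauto.
Qed.

Lemma exists_min (X : Type) (O : (X -> Prop) -> Prop) (Htop : is_topology O)
  (K : X -> Prop) (Kc : compact O K) (x : X) (Kx : K x) :
  exists y, minset O K y /\ spec_le O y x.
Proof.
  set (T := {y : X | K y /\ spec_le O y x}).
  assert (t0 : T) by (exists x; split; auto; intros U _ H; exact H).
  destruct (@ZL_prop T t0 (fun a b => spec_le O (proj1_sig b) (proj1_sig a))) as [t Ht].
  - intros t U _ H; exact H.
  - intros r s t H1 H2 U HU Hu. apply H1; auto. apply H2; auto.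
  - intros A HA. destruct (classic (exists s, A s)) as [[s0 Hs0]|Hne].
    2:{ exists t0. intros s Hs. exfalso. eauto. }
    destruct (classic (exists y, K y /\ forall s, A s -> spec_le O y (proj1_sig s))) as [[y [Ky Hy]]|Hno].
    + assert (Hyx : spec_le O y x).
      { intros U HU Hu. apply (proj2 (proj2_sig s0)); auto. apply Hy; auto. }
      exists (exist _ y (conj Ky Hyx)). intros s Hs. simpl. apply Hy; auto.
    + exfalso.
      destruct (Kc (fun U => exists s, A s /\ U = (fun z => ~ spec_le O z (proj1_sig s)))) as [l [Hl Hcov]].
      * intros U [s [_ ->]]. apply open_notbelow; auto.
      * intros z Kz. destruct (classic (exists s, A s /\ ~ spec_le O z (proj1_sig s))) as [[s [Hs Hz]]|Hn].
        -- exists (fun z => ~ spec_le O z (proj1_sig s)). split; eauto.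
        -- exfalso. apply Hno. exists z. split; auto. intros s Hs.
           apply NNPP. intro. apply Hn. eauto.
      * assert (Hm : exists m, A m /\ forall U, In U l -> exists s, A s /\
                  U = (fun z => ~ spec_le O z (proj1_sig s)) /\ spec_le O (proj1_sig m) (proj1_sig s)).
        { clear Hcov. induction l as [|U l IH].
          - exists s0. split; auto. intros U [].
          - destruct IH as [m [Am Hm]].
            + intros V HV. apply Hl. right; auto.
            + destruct (Hl U (or_introl eq_refl)) as [s1 [As1 ->]].
              destruct (HA m s1 Am As1) as [H|H].
              * exists s1. split; auto. intros V [<-|HV].
                -- exists s1. split; auto. split; auto. intros W _ Hw; exact Hw.
                -- destruct (Hm V HV) as [s [As [-> Hs]]]. exists s. split; auto. split; auto.
                   intros W HW Hw. apply Hs; auto. apply H; auto.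
              * exists m. split; auto. intros V [<-|HV].
                -- exists s1. split; auto.
                -- auto. }
        destruct Hm as [m [Am Hm]].
        destruct (Hcov (proj1_sig m) (proj1 (proj2_sig m))) as [U [HU Hu]].
        destruct (Hm U HU) as [s [_ [-> Hs]]]. apply Hu. exact Hs.
  - exists (proj1_sig t). split.
    + split. exact (proj1 (proj2_sig t)).
      intros y Ky Hyt.
      assert (Hyx : spec_le O y x).
      { intros U HU Hu. apply (proj2 (proj2_sig t)); auto. apply Hyt; auto. }
      exact (Ht (exist _ y (conj Ky Hyx)) Hyt).
    + exact (proj2 (proj2_sig t)).
Qed.

Arguments exists_min {X O} Htop {K} Kc {x} Kx.
Arguments open_union_nat {X O} Htop G.
Arguments open_union_list {X O} Htop l.
Arguments open_forall_le {X O} Htop G.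
Arguments open_imp {X O} Htop P B.
Arguments open_notbelow {X O} Htop c.

Lemma dir1 (X : Type) (O : (X -> Prop) -> Prop)
  (Htop : is_topology O) (Hwf : well_filtered O) (W : KX O -> Prop) :
  upper_vietoris_open (O:=O) W -> scott_open (KX_le (O:=O)) W.
Proof.
  intros Huv. split.
  - intros a b Wa Hab. destruct (Huv a Wa) as [U [HU [HaU HB]]].
    apply HB. intros z Hz. apply HaU. apply Hab. exact Hz.
  - intros D s [[d0 Dd0] Hdir] [Hub Hlub] Ws.
    destruct (Huv s Ws) as [U [HU [HsU HB]]].
    set (KK := fun K : X -> Prop => exists d, D d /\ K = proj1_sig d).
    assert (HKK : forall K, KK K -> isK O K).
    { intros K [d [_ ->]]. exact (proj2_sig d). }
    assert (Hf : filtered_incl KK).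
    { split. exists (proj1_sig d0). exists d0. auto.
      intros K1 K2 [d1 [D1 ->]] [d2 [D2 ->]]. destruct (Hdir d1 d2 D1 D2) as [c [Dc [H1 H2]]].
      exists (proj1_sig c). split. exists c; auto. split; auto. }
    set (I := fun z => forall K, KK K -> K z).
    assert (HI : isK O I).
    { split; [|split].
      - apply NNPP. intro Hne.
        destruct (Hwf (fun _ => False) KK (@open_empty X O Htop) HKK Hf) as [K [HK Hsub]].
        + intros z Hz. apply Hne. eauto.
        + destruct (HKK K HK) as [[z Hz] _]. exact (Hsub z Hz).
      - intros F HF Hcov.
        set (V := fun z => exists U, F U /\ U z).
        assert (HV : O V) by (apply (proj2 (proj2 Htop)); auto).
        destruct (Hwf V KK HV HKK Hf Hcov) as [K [HK HKV]].
        destruct (proj1 (proj2 (HKK K HK)) F HF HKV) as [l [Hl Hl2]].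
        exists l. split; auto. intros z Iz. apply Hl2. apply Iz. exact HK.
      - intros z y Iz Hzy K HK. apply (proj2 (proj2 (HKK K HK)) z y). apply Iz; exact HK. exact Hzy. }
    set (Ik := exist (isK O) I HI : KX O).
    assert (HIs : KX_le s Ik).
    { apply Hlub. intros d Dd z Iz. apply Iz. exists d; auto. }
    destruct (Hwf U KK HU HKK Hf) as [K [[d [Dd ->]] HdU]].
    + intros z Iz. apply HsU. apply HIs. exact Iz.
    + exists d. split; auto.
Qed.

Lemma bound_list (A : Type) (P : nat -> nat -> A -> Prop) (l : list A) :
  (forall U, In U l -> exists i m, P i m U) ->
  exists J, forall U, In U l -> exists i m, i <= J /\ m <= J /\ P i m U.
Proof.
  induction l as [|a l IH]; intros H.
  - exists 0. intros U [].
  - destruct IH as [J HJ]. { intros U HU. apply H. right; auto. }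
    destruct (H a (or_introl eq_refl)) as [i [m Hp]].
    exists (J + i + m). intros U [<-|HU].
    + exists i, m. repeat split; try lia. auto.
    + destruct (HJ U HU) as [i' [m' [H1 [H2 H3]]]]. exists i', m'. repeat split; try lia. auto.
Qed.

Lemma keylem (X : Type) (O : (X -> Prop) -> Prop) (Htop : is_topology O)
  (Ks : X -> Prop) (Kc : compact O Ks) (e : nat -> X) (B : nat -> nat -> X -> Prop)
  (HBo : forall i m, O (B i m)) (HBx : forall i m, B i m (e i))
  (HBb : forall i U, O U -> U (e i) -> exists m, subset (B i m) U)
  (Ke : forall n, Ks (e n)) (Cov : forall z, Ks z -> exists n, spec_le O (e n) z) :
  forall V, O V -> subset Ks V -> exists J, forall j, J <= j -> forall z,
    (exists n, forall i, i <= j -> forall k, k <= j -> B i k (e n) -> B i k z) -> V z.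
Proof.
  intros V HV HKV.
  destruct (Kc (fun U => exists i m, U = B i m /\ subset (B i m) V)) as [l [Hl Hcov]].
  - intros U [i [m [-> _]]]. auto.
  - intros z Kz. destruct (Cov z Kz) as [n Hn].
    destruct (HBb n V HV (HKV _ (Ke n))) as [m Hm].
    exists (B n m). split. eauto. apply Hn; auto.
  - destruct (@bound_list _ (fun i m U => U = B i m /\ subset (B i m) V) l Hl) as [J HJ].
    exists J. intros j Hj z [n Hz].
    destruct (Hcov (e n) (Ke n)) as [U [HU Hu]].
    destruct (HJ U HU) as [i [m [Hi [Hm [-> Hs]]]]].
    apply Hs. apply Hz; auto; lia.
Qed.

Lemma dir2 (X : Type) (O : (X -> Prop) -> Prop)
  (Htop : is_topology O)
  (Hfc : first_countable O)
  (Hmin : forall K : KX O, countable_set (minset O (proj1_sig K)))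
  (W : KX O -> Prop) :
  scott_open (KX_le (O:=O)) W -> upper_vietoris_open (O:=O) W.
Proof.
  intros [Wup Wsc] K WK.
  apply NNPP; intro Hno.
  pose proof (proj2_sig K) as HK. set (Ks := proj1_sig K) in *.
  destruct HK as [[x0 Kx0] [Kc Ksat]].
  destruct (exists_min Htop Kc Kx0) as [m0 [Mm0 _]].
  destruct (Hmin K) as [g Hg]. fold Ks in Hg.
  set (e := fun n => epsilon (inhabits m0) (fun y => minset O Ks y /\
              ((exists y', minset O Ks y' /\ g y' = n) -> g y = n))).
  assert (He : forall n, minset O Ks (e n) /\ ((exists y', minset O Ks y' /\ g y' = n) -> g (e n) = n)).
  { intro n. unfold e. apply epsilon_spec.
    destruct (classic (exists y', minset O Ks y' /\ g y' = n)) as [[y' [H1 H2]]|Hn].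
    - exists y'. auto.
    - exists m0. split; auto. intro; contradiction. }
  assert (Ke : forall n, Ks (e n)) by (intro n; exact (proj1 (proj1 (He n)))).
  assert (Cov : forall z, Ks z -> exists n, spec_le O (e n) z).
  { intros z Kz. destruct (exists_min Htop Kc Kz) as [y [My Hyz]].
    exists (g y). replace (e (g y)) with y; auto.
    apply Hg; auto. apply (proj1 (He (g y))). symmetry. apply (proj2 (He (g y))). eauto. }
  set (Bs := fun x => epsilon (inhabits (fun (_ : nat) (_ : X) => True))
      (fun Bf : nat -> X -> Prop => (forall n, O (Bf n) /\ Bf n x) /\
          (forall U, O U -> U x -> exists n, subset (Bf n) U))).
  assert (HBs : forall x, (forall n, O (Bs x n) /\ Bs x n x) /\
          (forall U, O U -> U x -> exists n, subset (Bs x n) U)).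
  { intro x. unfold Bs. apply epsilon_spec. apply Hfc. }
  set (B := fun i m => Bs (e i) m).
  assert (HBo : forall i m, O (B i m)) by (intros; apply (proj1 (HBs (e i)) m)).
  assert (HBx : forall i m, B i m (e i)) by (intros; apply (proj1 (HBs (e i)) m)).
  assert (HBb : forall i U, O U -> U (e i) -> exists m, subset (B i m) U)
    by (intros; apply (proj2 (HBs (e i))); auto).
  set (D := fun n j z => forall i, i <= j -> forall k, k <= j -> B i k (e n) -> B i k z).
  set (Uj := fun j z => exists n, D n j z).
  assert (HDo : forall n j, O (D n j)).
  { intros n j. unfold D.
    apply (open_forall_le Htop (fun i z => forall k, k <= j -> B i k (e n) -> B i k z)).
    intro i. apply (open_forall_le Htop (fun k z => B i k (e n) -> B i k z)).
    intro k. apply open_imp; auto. }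
  assert (HUo : forall j, O (Uj j)) by (intro j; apply open_union_nat; auto).
  assert (HKU : forall j, subset Ks (Uj j)).
  { intros j z Kz. destruct (Cov z Kz) as [n Hn]. exists n.
    intros i _ k _ Hb. apply Hn; auto. }
  pose proof (@keylem X O Htop Ks Kc e B HBo HBx HBb Ke Cov) as Key.
  assert (Hc : forall j, exists K' : KX O, subset (proj1_sig K') (Uj j) /\ ~ W K').
  { intro j. apply NNPP. intro Hn. apply Hno. exists (Uj j). split; auto. split; auto.
    intros K' HK'. apply NNPP. intro. apply Hn. eauto. }
  set (c := fun j => epsilon (inhabits K) (fun K' : KX O => subset (proj1_sig K') (Uj j) /\ ~ W K')).
  assert (Hcs : forall j, subset (proj1_sig (c j)) (Uj j) /\ ~ W (c j))
    by (intro j; unfold c; apply epsilon_spec; apply Hc).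
  set (Lset := fun k z => Ks z \/ exists j, k <= j /\ proj1_sig (c j) z).
  assert (HL : forall k, isK O (Lset k)).
  { intro k. split; [|split].
    - exists x0. left; auto.
    - intros F HF Hcov.
      destruct (Kc F HF (fun z Kz => Hcov z (or_introl Kz))) as [l1 [Hl1 Hc1]].
      set (V := fun z => exists U, In U l1 /\ U z).
      assert (HV : O V) by (apply open_union_list; auto).
      destruct (Key V HV Hc1) as [J HJ].
      assert (Hfin : forall N, exists l, (forall U, In U l -> F U) /\
         forall j, k <= j -> j < N -> forall z, proj1_sig (c j) z -> exists U, In U l /\ U z).
      { induction N as [|N [l [Hl Hlc]]].
        - exists nil. split. intros U []. intros; lia.
        - destruct (le_lt_dec k N) as [HkN|HkN].
          + destruct (proj1 (proj2 (proj2_sig (c N))) F HF) as [l2 [Hl2 Hl2c]].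
            { intros z Hz. apply Hcov. right. exists N. auto. }
            exists (l ++ l2). split.
            * intros U HU. apply in_app_iff in HU. destruct HU; auto.
            * intros j Hkj HjN z Hz. destruct (Nat.eq_dec j N) as [->|Hne].
              -- destruct (Hl2c z Hz) as [U [HU Hu]]. exists U. rewrite in_app_iff. auto.
              -- destruct (Hlc j Hkj ltac:(lia) z Hz) as [U [HU Hu]]. exists U. rewrite in_app_iff. auto.
          + exists l. split; auto. intros j Hkj HjN. apply Hlc; lia. }
      destruct (Hfin J) as [l [Hl Hlc]].
      exists (l1 ++ l). split.
      + intros U HU. apply in_app_iff in HU. destruct HU; auto.
      + intros z [Kz|[j [Hkj Hz]]].
        * destruct (Hc1 z Kz) as [U [HU Hu]]. exists U. rewrite in_app_iff. auto.
        * destruct (le_lt_dec J j) as [HJj|HjJ].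
          -- destruct (HJ j HJj z (proj1 (Hcs j) z Hz)) as [U [HU Hu]].
             exists U. rewrite in_app_iff. auto.
          -- destruct (Hlc j Hkj HjJ z Hz) as [U [HU Hu]]. exists U. rewrite in_app_iff. auto.
    - intros z y [Kz|[j [Hkj Hz]]] Hzy.
      + left. apply (Ksat z y); auto.
      + right. exists j. split; auto. apply (proj2 (proj2 (proj2_sig (c j))) z y); auto. }
  set (Lk := fun k => exist (isK O) (Lset k) (HL k) : KX O).
  set (Dfam := fun d => exists k, d = Lk k).
  destruct (Wsc Dfam K) as [d [[k ->] Wd]].
  - split.
    + exists (Lk 0). exists 0. auto.
    + intros a b [ka ->] [kb ->]. exists (Lk (Nat.max ka kb)). split. eexists; eauto.
      split; intros z [Kz|[j [Hj Hz]]]; (left; assumption) || (right; exists j; split; auto; lia).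
  - split.
    + intros d [k ->] z Kz. left. exact Kz.
    + intros u Hu z uz. apply NNPP. intro nKz.
      assert (HV : O (fun w => ~ spec_le O w z)) by apply open_notbelow, Htop.
      assert (HKV : subset Ks (fun w => ~ spec_le O w z)).
      { intros w Kw Hwz. apply nKz. apply (Ksat w z Kw Hwz). }
      destruct (Key _ HV HKV) as [J HJ].
      destruct (Hu (Lk J) (ex_intro _ J eq_refl) z uz) as [Kz|[j [Hj Hz]]].
      * contradiction.
      * apply (HJ j Hj z (proj1 (Hcs j) z Hz)). intros U _ Hu'; exact Hu'.
  - exact WK.
  - apply (proj2 (Hcs k)). apply (Wup (Lk k)); auto.
    intros z Hz. right. exists k. split; auto.
Qed.

Theorem mainTheorem11 (X : Type) (O : (X -> Prop) -> Prop)
  (Htop : is_topology O) (HT0 : T0 O)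
  (Hfc : first_countable O) (Hwf : well_filtered O)
  (Hmin : forall K : KX O, countable_set (minset O (proj1_sig K))) :
  forall W : KX O -> Prop,
    upper_vietoris_open (O:=O) W <-> scott_open (KX_le (O:=O)) W.
Proof.
  intros W. split.
  - apply dir1; auto.
  - apply dir2; auto.
Qed.
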